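(* Let $\Phi=\Phi_{\vec p}$ be a Weyl channel, written as $\Phi=\frac1N\sum_{\mu=0}^{N^2-1}\lambda_\mu|U_\mu\rangle\rangle\langle\langle U_\mu|$, where $\lambda_{mn}=\sum_{k,l}H_{mn,kl}\,p_{kl}$ (so $\lambda_0=1$). Then $\Phi\in\mathcal{A}_N^Q$ if and only if there exists a choice of logarithms $\ell_\nu$ (complex numbers with $e^{\ell_\nu}=\lambda_\nu$, $\nu=1,\dots,N^2-1$) such that for every $\mu=1,\dots,N^2-1$ the number $$t_\mu=\frac1{N^2}\sum_{\nu=1}^{N^2-1}H_{\mu\nu}\,\ell_\nu$$ is real and non-negative. In that case $\Phi=\exp\big(\sum_{\mu=1}^{N^2-1}t_\mu\mathcal{L}_\mu\big)$.
   Context: Let $N\ge2$, $\omega=e^{2\pi i/N}$, $X|j\rangle=|j\oplus1\rangle$ (addition mod $N$), $Z=\mathrm{diag}(1,\omega,\dots,\omega^{N-1})$, Weyl unitaries $U_{kl}=X^kZ^l$, $k,l\in\{0,\dots,N-1\}$, also indexed by $\mu=Nk+l\in\{0,\dots,N^2-1\}$. Maps on $N\times N$ matrices are identified with superoperators acting on $|A\rangle\rangle=\sum_{ij}A_{ij}|i\rangle|j\rangle$ ($\rho\mapsto K\rho K^\dagger$ corresponds to $K\otimes\overline{K}$). A Weyl channel is $\Phi_{\vec p}=\sum_\mu p_\mu U_\mu\otimes\overline{U}_\mu$ with $\vec p$ a probability vector of length $N^2$. $H$ is the $N^2\times N^2$ matrix with entries $H_{mn,kl}=\omega^{ml-kn}$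 (rows indexed by $\mu=Nm+n$, columns by $\nu=Nk+l$). $\mathcal{L}_\mu=U_\mu\otimes\overline{U}_\mu-\mathbb{I}_{N^2}$, and $\mathcal{A}_N^Q$ is the set of superoperators $\exp(\sum_{\mu=1}^{N^2-1}t_\mu\mathcal{L}_\mu)$ with all $t_\mu\ge0$. *)

(* Defs.v *)
From HB Require Import structures.
From mathcomp Require Import all_boot all_order all_algebra.
From mathcomp Require Import all_classical all_reals.
From mathcomp Require Import topology normedtype sequences exp trigo.
From mathcomp Require Import complex.
From mathcomp Require mxtens.
Set Implicit Arguments.
Unset Strict Implicit.
Unset Printing Implicit Defensive.
Import Order.TTheory GRing.Theory Num.Theory.
Import numFieldNormedType.Exports.
Local Open Scope ring_scope.
Local Open Scope classical_set_scope.

Notation Cx R := (complex.complex R).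
Notation cRe := complex.Re.
Notation cIm := complex.Im.
Notation cconj := complex.conjc.

Section Weyl.
Variable R : realType.
Local Notation C := (Cx R).

Definition cR (x : R) : C := complex.Complex x 0.

Definition cexp (z : C) : C :=
  complex.Complex (expR (cRe z) * cos (cIm z)) (expR (cRe z) * sin (cIm z)).

Definition ccvg (u : nat -> C) (z : C) : Prop :=
  (fun n => cRe (u n) : R) @ \oo --> (cRe z : R) /\
  (fun n => cIm (u n) : R) @ \oo --> (cIm z : R).

Definition is_mexp (n : nat) (A B : 'M[C]_n) : Prop :=
  forall i j, ccvg (fun m => (\sum_(k < m) ((k`!)%:R)^-1 *: (A ^+ k)) i j) (B i j).

Variable N : nat.

Definition omega : C := cexp (complex.Complex 0 (2 * pi / N%:R)).

Definition shiftX : 'M[C]_N := \matrix_(i < N, j < N) ((i == (j.+1 %% N)%N :> nat)%:R).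

Definition clockZ : 'M[C]_N := \matrix_(i < N, j < N) ((i == j)%:R * omega ^+ i).

Definition weylU (kl : 'I_N * 'I_N) : 'M[C]_N := shiftX ^+ kl.1 *m clockZ ^+ kl.2.

(* superoperator of rho |-> K rho K^dagger, acting on |A>> = sum A_ij |i>|j> *)
Definition superop (K : 'M[C]_N) : 'M[C]_(N * N) :=
  mxtens.tensmx K (map_mx cconj K).

Definition weyl_channel (p : 'I_N * 'I_N -> R) : 'M[C]_(N * N) :=
  \sum_(mu : 'I_N * 'I_N) cR (p mu) *: superop (weylU mu).

Definition is_prob_vector (p : 'I_N * 'I_N -> R) : Prop :=
  (forall mu, 0 <= p mu) /\ \sum_(mu : 'I_N * 'I_N) p mu = 1.

(* H_{mn,kl} = omega^{ml - kn} (exponent taken mod N, as omega^N = 1) *)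
Definition Hmat (mn kl : 'I_N * 'I_N) : C :=
  omega ^+ ((mn.1 * kl.2 + (N - (kl.1 * mn.2) %% N)) %% N)%N.

Definition lambda (p : 'I_N * 'I_N -> R) (mn : 'I_N * 'I_N) : C :=
  \sum_(kl : 'I_N * 'I_N) Hmat mn kl * cR (p kl).

(* index mu = N k + l is zero iff k = l = 0 *)
Definition is_zero_idx (mu : 'I_N * 'I_N) : bool :=
  ((mu.1 : nat) == 0%N) && ((mu.2 : nat) == 0%N).

Definition Lgen (mu : 'I_N * 'I_N) : 'M[C]_(N * N) := superop (weylU mu) - 1%:M.

Definition in_AQ (Phi : 'M[C]_(N * N)) : Prop :=
  exists t : 'I_N * 'I_N -> R, (forall mu, ~~ is_zero_idx mu -> 0 <= t mu) /\
    is_mexp (\sum_(mu | ~~ is_zero_idx mu) cR (t mu) *: Lgen mu) Phi.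

Definition tcoef (l : 'I_N * 'I_N -> C) (mu : 'I_N * 'I_N) : C :=
  ((N ^ 2)%:R)^-1 * \sum_(nu | ~~ is_zero_idx nu) Hmat mu nu * l nu.

Definition good_logs (p : 'I_N * 'I_N -> R) (l : 'I_N * 'I_N -> C) : Prop :=
  (forall nu, ~~ is_zero_idx nu -> cexp (l nu) = lambda p nu) /\
  (forall mu, ~~ is_zero_idx mu -> cIm (tcoef l mu) = 0 /\ 0 <= cRe (tcoef l mu)).

End Weyl.

(* Main.v *)
Require Import Defs.
From HB Require Import structures.
From mathcomp Require Import all_boot all_order all_algebra.
From mathcomp Require Import all_classical all_reals.
From mathcomp Require Import topology normedtype sequences exp trigo.
From mathcomp Require Import complex.
From mathcomp Require mxtens.
From mathcomp Require Import ring.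
Local Open Scope ring_scope.
Import Order.TTheory GRing.Theory Num.Theory.
Import numFieldNormedType.Exports.
Local Open Scope classical_set_scope.
Local Open Scope ring_scope.
Section ES.
Variable F : numFieldType.
Definition es m (x : F) := \sum_(k < m) (k`!%:R)^-1 * x ^+ k.

Lemma tri_sum (V : zmodType) (g : nat -> nat -> V) m :
  \sum_(0 <= i < m) \sum_(0 <= j < (m - i)%N) g i j =
  \sum_(0 <= n < m) \sum_(0 <= i < n.+1) g i (n - i)%N.
Proof.
elim: m => [|m IH]; first by rewrite !big_geq.
rewrite [in RHS]big_nat_recr //= -IH.
rewrite big_nat_recr //= subSnn big_nat1.
rewrite [in RHS]big_nat_recr // subnn addrA.
have E : \sum_(0 <= i < m) \sum_(0 <= j < (m.+1 - i)%N) g i j =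
  \sum_(0 <= i < m) (\sum_(0 <= j < (m - i)%N) g i j + g i (m - i)%N).
  apply: eq_big_nat => i /andP[_ him].
  rewrite subSn; last exact: ltnW.
  exact: big_nat_recr.
rewrite E big_split.
by congr (_ + _).
Qed.

Definition gt (x y : F) i j := ((i`!%:R)^-1 * x ^+ i) * ((j`!%:R)^-1 * y ^+ j).

Lemma es_prod m x y : es m x * es m y =
  \sum_(0 <= i < m) \sum_(0 <= j < m) gt x y i j.
Proof.
rewrite /es big_distrl /= big_mkord; apply: eq_bigr => i _.
by rewrite big_distrr /= big_mkord.
Qed.

Lemma es_add m x y : es m (x + y) =
  \sum_(0 <= i < m) \sum_(0 <= j < (m - i)%N) gt x y i j.
Proof.
rewrite tri_sum /es -(big_mkord xpredT (fun k => (k`!%:R)^-1 * (x+y) ^+ k)).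
apply: eq_big_nat => n _.
rewrite addrC exprDn big_distrr /= big_mkord; apply: eq_bigr => i _.
rewrite /gt.
have hi : (i <= n)%N by rewrite -ltnS.
have := bin_fact hi => hb.
have nz : forall k, (k`!%:R : F) != 0 by move=> k; rewrite pnatr_eq0 -lt0n fact_gt0.
have coef : (n`!%:R)^-1 * ('C(n, i))%:R = (i`!%:R)^-1 * ((n - i)`!%:R : F)^-1.
  apply: (mulfI (nz n)); rewrite mulrA mulfV // mul1r -hb natrM natrM.
  by rewrite -mulrA [X in _ * X]mulrACA !mulfV ?nz // !mulr1.
rewrite -[_ *+ 'C(n, i)]mulr_natr.
transitivity (((n`!%:R)^-1 * ('C(n,i))%:R) * (x^+i * y^+(n-i))); first by ring.
rewrite coef; ring.
Qed.

Lemma es_diff m x y : es m x * es m y - es m (x + y) =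
  \sum_(0 <= i < m) \sum_((m - i)%N <= j < m) gt x y i j.
Proof.
rewrite es_prod es_add -sumrB; apply: eq_big_nat => i /andP[_ him].
have -> : \sum_(0 <= j < m) gt x y i j = \sum_(0 <= j < (m - i)%N) gt x y i j
   + \sum_((m - i)%N <= j < m) gt x y i j.
  by apply: big_cat_nat; rewrite ?leq_subr.
by rewrite addrC addKr.
Qed.

Lemma es_diff_norm m x y :
  `| es m x * es m y - es m (x + y) | <=
  es m `|x| * es m `|y| - es m (`|x| + `|y|).
Proof.
rewrite !es_diff; apply: (le_trans (ler_norm_sum _ _ _)).
apply: ler_sum => i _; apply: (le_trans (ler_norm_sum _ _ _)).
apply: ler_sum => j _; rewrite /gt !normrM !normrX !normfV !normr_nat.
by [].
Qed.
End ES.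
Arguments es {F}.
Arguments gt {F}.

Section CE.
Variable R : realType.
Local Notation C := (Cx R).

Lemma Re_sum I r (P : pred I) (f : I -> C) :
  cRe (\sum_(i <- r | P i) f i) = \sum_(i <- r | P i) cRe (f i).
Proof.
elim/big_rec2: _ => // i y1 y2 _ <-.
by case: (f i) => ? ?; case: y2.
Qed.

Lemma Im_sum I r (P : pred I) (f : I -> C) :
  cIm (\sum_(i <- r | P i) f i) = \sum_(i <- r | P i) cIm (f i).
Proof.
elim/big_rec2: _ => // i y1 y2 _ <-.
by case: (f i) => ? ?; case: y2.
Qed.

Lemma es_real m (a : R) : es m (cR a) = cR (es m a).
Proof.
rewrite /es /cR.
change (\sum_(k < m) (k`!%:R)^-1 * (a%:C)%C ^+ k = ((\sum_(k < m) (k`!%:R)^-1 * a ^+ k)%:C)%C).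
rewrite rmorph_sum; apply: eq_bigr => k _.
by rewrite rmorphM fmorphV rmorph_nat rmorphXn.
Qed.

Lemma powI (b : R) k : (complex.Complex 0 b) ^+ k =
  complex.Complex ((~~ odd k)%:R * (-1) ^+ k./2 * b ^+ k)
                  ((odd k)%:R * (-1) ^+ k.-1./2 * b ^+ k).
Proof.
elim: k => [|k IH].
  by apply/eqP; rewrite eq_complex /= !expr0 !mulr1 ?mul0r !eqxx.
rewrite exprS IH; apply/eqP; rewrite eq_complex /=.
case: k {IH} => [|k] /=.
  by rewrite !expr0 !mul0r !mulr0 !mul1r !mulr1 subr0 add0r expr1 !eqxx.
case: (odd k) => /=; rewrite ?mul0r ?mulr0 ?mul1r ?mulr1 ?subr0 ?add0r ?sub0r ?addr0.
  by apply/andP; split => //; apply/eqP; rewrite mulrCA -exprS.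
apply/andP; split => //; apply/eqP.
by rewrite !exprS; ring.
Qed.


Lemma cR_nat k : (k%:R : C) = cR (k%:R).
Proof. by rewrite /cR; change ((k%:R : C) = (k%:R : R)%:C%C); rewrite rmorph_nat. Qed.

Lemma cR_invnat k : ((k%:R : C)^-1) = cR ((k%:R)^-1).
Proof.
rewrite cR_nat /cR; change ((((k%:R : R)%:C)^-1)%C = ((k%:R : R)^-1)%:C%C).
by rewrite fmorphV.
Qed.

Lemma ReMr (c : R) (w : C) : cRe (cR c * w) = c * cRe w.
Proof. by case: w => a b /=; rewrite mul0r subr0. Qed.

Lemma ImMr (c : R) (w : C) : cIm (cR c * w) = c * cIm w.
Proof. by case: w => a b /=; rewrite mul0r addr0. Qed.

Lemma es_imag_Re m (b : R) :
  cRe (es m (complex.Complex 0 b)) = series (cos_coeff b) m.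
Proof.
rewrite /es Re_sum /series /= big_mkord; apply: eq_bigr => k _.
by rewrite cR_invnat ReMr powI /= mulrC.
Qed.

Lemma es_imag_Im m (b : R) :
  cIm (es m (complex.Complex 0 b)) = series (sin_coeff b) m.
Proof.
rewrite /es Im_sum /series /= big_mkord; apply: eq_bigr => k _.
by rewrite cR_invnat ImMr powI /= mulrC.
Qed.


Lemma ReB (u v : C) : cRe (u - v) = cRe u - cRe v.
Proof. by case: u => ? ?; case: v => ? ?. Qed.
Lemma ImB (u v : C) : cIm (u - v) = cIm u - cIm v.
Proof. by case: u => ? ?; case: v => ? ?. Qed.

Lemma es_exp_cvg (a : R) : (fun m => es m a) @ \oo --> expR a.
Proof.
have -> : (fun m => es m a) = series (exp_coeff a).
  apply/funext => m; rewrite /series /es /= big_mkord; apply: eq_bigr => k _.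
  by rewrite /exp_coeff /= mulrC.
exact: is_cvg_series_exp_coeff.
Qed.

Lemma cos_cvg (b : R) : series (cos_coeff b) @ \oo --> cos b.
Proof. rewrite unlock; exact: is_cvg_series_cos_coeff. Qed.

Lemma sin_cvg (b : R) : series (sin_coeff b) @ \oo --> sin b.
Proof. rewrite unlock; exact: is_cvg_series_sin_coeff. Qed.

Lemma norm_cR (a : R) : `|cR a| = cR `|a|.
Proof.
rewrite normc_def /cR /=; congr (complex.Complex _ _).
by rewrite expr0n /= addr0 sqrtr_sqr.
Qed.

Lemma norm_cI (b : R) : `|complex.Complex 0 b| = cR `|b|.
Proof.
rewrite normc_def /cR /=; congr (complex.Complex _ _).
by rewrite expr0n /= add0r sqrtr_sqr.
Qed.

Lemma Re_le_norm (w : C) (B : R) : `|w| <= cR B -> `|cRe w| <= B /\ `|cIm w| <= B.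
Proof.
rewrite normc_def lecE /= => /andP[_ h]; split; apply: le_trans h.
  rewrite -sqrtr_sqr ler_sqrt ?addr_ge0 ?sqr_ge0 //.
  by rewrite lerDl sqr_ge0.
rewrite -sqrtr_sqr ler_sqrt ?addr_ge0 ?sqr_ge0 //.
by rewrite lerDr sqr_ge0.
Qed.

Lemma cexp_series (z : C) : ccvg (fun m => es m z) (cexp z).
Proof.
case: z => a b.
set x := cR a; set y := complex.Complex 0 b.
have hz : complex.Complex a b = x + y.
  by apply/eqP; rewrite eq_complex /= addr0 add0r !eqxx.
pose D m := es m x * es m y - es m (x + y).
have hes m : es m (complex.Complex a b) = es m x * es m y - D m.
  by rewrite hz /D subKr.
pose B m := es m `|a| * es m `|b| - es m (`|a| + `|b|).
have hD m : `|cRe (D m)| <= B m /\ `|cIm (D m)| <= B m.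
  apply: Re_le_norm; apply: (le_trans (es_diff_norm _ _ _ _)).
  rewrite /x /y norm_cR norm_cI.
  have -> : cR `|a| + cR `|b| = cR (`|a| + `|b|) by rewrite /cR; apply/eqP; rewrite eq_complex /= addr0 !eqxx.
  rewrite !es_real /B /cR lecE /= !mulr0 !mul0r subr0 addr0 oppr0 addr0 eqxx lexx //.
have hB : B @ \oo --> 0.
  rewrite -(subrr (expR (`|a| + `|b|))) [X in _ --> X - _]expRD.
  apply: cvgB; first apply: cvgM; exact: es_exp_cvg.
have hRe : (fun m => cRe (D m)) @ \oo --> 0.
  apply: (@squeeze_cvgr _ _ _ _ (fun m => - B m) B); last exact: hB.
    by apply: nearW => m; have [h _] := hD m; rewrite -ler_norml.
  by rewrite -oppr0; apply: cvgN.
have hIm : (fun m => cIm (D m)) @ \oo --> 0.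
  apply: (@squeeze_cvgr _ _ _ _ (fun m => - B m) B); last exact: hB.
    by apply: nearW => m; have [_ h] := hD m; rewrite -ler_norml.
  by rewrite -oppr0; apply: cvgN.
split.
- have -> : (fun m => cRe (es m (complex.Complex a b))) =
     (fun m => es m a * series (cos_coeff b) m - cRe (D m)).
    apply/funext => m; rewrite hes ReB /x es_real ReMr es_imag_Re //.
  rewrite /= -[X in _ --> X]subr0.
  by apply: cvgB => //; apply: cvgM; [exact: es_exp_cvg | exact: cos_cvg].
- have -> : (fun m => cIm (es m (complex.Complex a b))) =
     (fun m => es m a * series (sin_coeff b) m - cIm (D m)).
    apply/funext => m; rewrite hes ImB /x es_real ImMr es_imag_Im //.
  rewrite /= -[X in _ --> X]subr0.
  by apply: cvgB => //; apply: cvgM; [exact: es_exp_cvg | exact: sin_cvg].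
Qed.


Lemma ReD (u v : C) : cRe (u + v) = cRe u + cRe v.
Proof. by case: u => ? ?; case: v => ? ?. Qed.
Lemma ImD (u v : C) : cIm (u + v) = cIm u + cIm v.
Proof. by case: u => ? ?; case: v => ? ?. Qed.

Lemma ccvg_add u v (a b : C) : ccvg u a -> ccvg v b -> ccvg (fun m => u m + v m) (a + b).
Proof.
move=> [h1 h2] [h3 h4]; split.
  under eq_fun do rewrite ReD. rewrite ReD; exact: cvgD.
under eq_fun do rewrite ImD. rewrite ImD; exact: cvgD.
Qed.

Lemma ccvg_cst (a : C) : ccvg (fun _ => a) a.
Proof. split; exact: cvg_cst. Qed.

Lemma ccvg_sum (I : Type) (r : seq I) (P : pred I) (u : I -> nat -> C) (z : I -> C) :
  (forall i, ccvg (u i) (z i)) ->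
  ccvg (fun m => \sum_(i <- r | P i) u i m) (\sum_(i <- r | P i) z i).
Proof.
move=> h; elim: r => [|i r IH].
  under eq_fun do rewrite big_nil. rewrite big_nil; exact: ccvg_cst.
have E : forall (F : I -> C), \sum_(j <- i :: r | P j) F j =
    (if P i then F i else 0) + \sum_(j <- r | P j) F j.
  by move=> F; rewrite big_cons; case: (P i); rewrite ?add0r.
under eq_fun do rewrite E. rewrite E.
apply: ccvg_add => //; case: (P i) => //; exact: ccvg_cst.
Qed.

Lemma ReM (u v : C) : cRe (u * v) = cRe u * cRe v - cIm u * cIm v.
Proof. by case: u => ? ?; case: v => ? ?. Qed.
Lemma ImM (u v : C) : cIm (u * v) = cRe u * cIm v + cIm u * cRe v.
Proof. by case: u => ? ?; case: v => ? ?. Qed.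

Lemma ccvg_mull (a : C) u (z : C) : ccvg u z -> ccvg (fun m => a * u m) (a * z).
Proof.
move=> [h1 h2]; split.
  under eq_fun do rewrite ReM. rewrite ReM.
  by apply: cvgB; apply: cvgMl_tmp.
under eq_fun do rewrite ImM. rewrite ImM.
by apply: cvgD; apply: cvgMl_tmp.
Qed.

Lemma ccvg_mulr (a : C) u (z : C) : ccvg u z -> ccvg (fun m => u m * a) (z * a).
Proof.
move=> h; under eq_fun do rewrite mulrC. rewrite mulrC; exact: ccvg_mull.
Qed.

Lemma ccvg_unique u (a b : C) : ccvg u a -> ccvg u b -> a = b.
Proof.
move=> [h1 h2] [h3 h4].
have e1 := @cvg_lim _ (@Rhausdorff R) _ _ _ _ _ h1.
have e2 := @cvg_lim _ (@Rhausdorff R) _ _ _ _ _ h2.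
have e3 := @cvg_lim _ (@Rhausdorff R) _ _ _ _ _ h3.
have e4 := @cvg_lim _ (@Rhausdorff R) _ _ _ _ _ h4.
clear h1 h2 h3 h4; move: e1 e2 e3 e4; case: a => a1 a2; case: b => b1 b2 /= e1 e2 e3 e4.
by congr complex.Complex; [rewrite -e1 -e3 | rewrite -e2 -e4].
Qed.

End CE.

Section Om.
Variable R : realType.
Local Notation C := (Cx R).
Variable n : nat.
Local Notation N := n.+2.

Definition Ei (t : R) : C := complex.Complex (cos t) (sin t).

Lemma EiD s t : Ei s * Ei t = Ei (s + t).
Proof. by rewrite /Ei cosD sinD /=; congr complex.Complex; rewrite addrC. Qed.

Definition th : R := 2 * pi / N%:R.

Lemma omegaE : omega R N = Ei th.
Proof. by rewrite /omega /cexp /Ei /= expR0 !mul1r /th. Qed.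

Lemma omX k : omega R N ^+ k = Ei (k%:R * th).
Proof.
elim: k => [|k IH].
  by rewrite expr0 mul0r /Ei cos0 sin0.
by rewrite exprSr IH omegaE EiD mulrSr mulrDl mul1r.
Qed.

Lemma omN : omega R N ^+ N = 1.
Proof.
rewrite omX /th mulrC divfK ?pnatr_eq0 // mulr_natl.
by rewrite /Ei cos2pi /= sin2pi.
Qed.

Lemma om_mod k : omega R N ^+ (k %% N) = omega R N ^+ k.
Proof.
by rewrite {2}(divn_eq k N) exprD mulnC exprM omN expr1n mul1r.
Qed.

Lemma conj_om : cconj (omega R N) * omega R N = 1.
Proof.
rewrite omegaE /Ei /=; apply/eqP; rewrite eq_complex /= mulNr opprK -!expr2 cos2Dsin2 eqxx /=.
by rewrite mulNr mulrC subrr.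
Qed.

Lemma cos_ne1 (x : R) : 0 < x -> x < pi *+ 2 -> cos x != 1.
Proof.
move=> x0 x2; apply/eqP => hc.
have pi0 : (0:R) < pi := pi_gt0 R.
have [xle|xgt] := leP x pi.
  have := @cos_inj R x 0; rewrite cos0 hc => /(_ _ _ erefl).
  rewrite !in_itv /= lexx (ltW x0) xle ltW // => /(_ isT isT) /eqP.
  by rewrite gt_eqF.
have h : cos (pi *+ 2 - x) = 1 by rewrite addrC cosD2pi cosN.
have := @cos_inj R (pi *+ 2 - x) 0; rewrite cos0 h => /(_ _ _ erefl).
rewrite !in_itv /= lexx subr_ge0 (ltW x2) lerBlDr.
rewrite mulr2n lerD2l (ltW xgt) (ltW pi0) => /(_ isT isT) /eqP.
by rewrite subr_eq0 -mulr2n => /eqP hx; rewrite hx ltxx in x2.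
Qed.

Local Notation om := (omega R N).

Lemma om_ne1 k : (0 < k < N)%N -> om ^+ k != 1.
Proof.
move=> /andP[k0 kN]; rewrite omX; apply/negP => /eqP h.
have : cos (k%:R * th) = 1 by move: h => /(congr1 (@complex.Re R)).
apply/eqP/cos_ne1.
  by rewrite /th mulr_gt0 ?divr_gt0 ?mulr_gt0 ?pi_gt0 ?ltr0n.
rewrite /th mulrA ltr_pdivrMr ?ltr0n // -(mulr_natl pi 2) [X in _ < X]mulrC.
by rewrite ltr_pM2r ?ltr_nat // mulr_gt0 ?pi_gt0.
Qed.

Definition chi (x : 'I_N) : C := om ^+ x.

Lemma chiD (x y : 'I_N) : chi (x + y) = chi x * chi y.
Proof. by rewrite /chi /= om_mod exprD. Qed.

Lemma chiM (x y : 'I_N) : chi (x * y) = om ^+ (x * y)%N.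
Proof. by rewrite /chi /= om_mod. Qed.

Lemma chi0 : chi 0 = 1.
Proof. by rewrite /chi expr0. Qed.

Lemma conj_chi x : cconj (chi x) = chi (- x).
Proof.
have h1 : cconj (chi x) * chi x = 1 by rewrite /chi rmorphXn -exprMn conj_om expr1n.
have h2 : chi (- x) * chi x = 1 by rewrite -chiD addNr chi0.
by rewrite -[LHS]mulr1 -h2 mulrCA h1 mulr1.
Qed.

Lemma sum_chi (y : 'I_N) : \sum_(x : 'I_N) chi (x * y) = if y == 0 then N%:R else 0.
Proof.
under eq_bigr do rewrite chiM mulnC exprM.
case: eqP => [->|hy].
  under eq_bigr do rewrite expr0 expr1n.
  by rewrite sumr_const card_ord.
set r := om ^+ y.
have hr : r != 1.
  apply: om_ne1; rewrite ltn_ord andbT lt0n; apply/eqP => h; apply: hy.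
  by apply: val_inj.
have : (r - 1) * \sum_(i < N) r ^+ i = 0.
  by rewrite -subrX1 /r -exprM mulnC exprM omN expr1n subrr.
by move/eqP; rewrite mulf_eq0 subr_eq0 (negPf hr) /= => /eqP.
Qed.

Local Notation L := ('I_N * 'I_N)%type.

Lemma HmatE (mn kl : L) : Hmat R mn kl = chi (mn.1 * kl.2 - kl.1 * mn.2).
Proof.
rewrite /Hmat /chi /=.
by rewrite om_mod [RHS]om_mod !exprD om_mod (om_mod (N - _)).
Qed.

Lemma sum_delta (F : 'I_N -> C) (c : 'I_N) : \sum_a (a == c)%:R * F a = F c.
Proof.
rewrite (bigD1 c) //= eqxx mul1r big1 ?addr0 // => a /negPf ->.
by rewrite mul0r.
Qed.

Lemma sum_shift (F : 'I_N -> C) (i k : 'I_N) : \sum_a (i == a + k)%:R * F a = F (i - k).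
Proof.
rewrite -(sum_delta F (i - k)); apply: eq_bigr => a _.
by rewrite (eq_sym a) subr_eq.
Qed.

Lemma shiftXE (i j : 'I_N) : shiftX R N i j = (i == j + 1)%:R.
Proof.
rewrite mxE /=; congr (_%:R).
have h : nat_of_ord (j + 1 : 'I_N) = (j.+1 %% N)%N.
  by rewrite /= (@modn_small 1) ?addn1.
by rewrite -h.
Qed.

Lemma clockZE (i j : 'I_N) : clockZ R N i j = (i == j)%:R * om ^+ i.
Proof. by rewrite mxE. Qed.

Lemma shiftXkE k (i j : 'I_N) : (shiftX R N ^+ k) i j = (i == j + k%:R)%:R.
Proof.
elim: k i j => [|k IH] i j.
  by rewrite expr0 mxE addr0.
rewrite exprSr -mulmxE mxE.
under eq_bigr do rewrite IH shiftXE.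
by rewrite sum_shift subr_eq mulrS addrA.
Qed.

Lemma clockZlE l (i j : 'I_N) : (clockZ R N ^+ l) i j = (i == j)%:R * om ^+ (i * l).
Proof.
elim: l i j => [|l IH] i j.
  by rewrite expr0 mxE muln0 expr0 mulr1.
rewrite exprSr -mulmxE mxE.
under eq_bigr do rewrite IH clockZE.
rewrite (bigD1 j) //= big1 ?addr0.
  case: eqP => [->|_]; last by rewrite !mul0r.
  by rewrite eqxx !mul1r mulnS addnC exprD.
by move=> a /negPf ->; rewrite /= !(mul0r, mulr0).
Qed.

Lemma weylUE (k l i j : 'I_N) : weylU R (k, l) i j = (i == j + k)%:R * chi (j * l).
Proof.
rewrite /weylU mxE /=.
under eq_bigr do rewrite shiftXkE clockZlE natr_Zp.
rewrite sum_shift subr_eq; case: eqP => [->|_]; last by rewrite !mul0r.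
by rewrite addrK chiM.
Qed.


Lemma conj_nat (b : bool) (x : C) : cconj ((b%:R : C) * x) = b%:R * cconj x.
Proof. by rewrite rmorphM rmorph_nat. Qed.

Lemma tr_orth (c c' : L) :
  \sum_(i : 'I_N) \sum_(j : 'I_N) cconj (weylU R c i j) * weylU R c' i j =
  (c == c')%:R * N%:R.
Proof.
case: c => k l; case: c' => k' l'.
rewrite exchange_big /=.
under eq_bigr => j _.
  under eq_bigr => i _ do
    rewrite !weylUE conj_nat mulrAC -mulrA.
  rewrite sum_delta (inj_eq (addrI _)) conj_chi -mulrA -chiD -mulrN -mulrDr.
  over.
rewrite xpair_eqE /=; case: (k =P k') => [_|hk] /=; last first.
  by rewrite mul0r big1 // => j _; rewrite mul0r.
under eq_bigr do rewrite mul1r.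
rewrite sum_chi subr_eq0 (eq_sym l).
by case: (l' == l); rewrite ?mul1r ?mul0r.
Qed.


Lemma eig (mu c : L) (i j : 'I_N) :
  \sum_a \sum_b weylU R mu i a * cconj (weylU R mu j b) * weylU R c a b =
  Hmat R c mu * weylU R c i j.
Proof.
case: mu => k l; case: c => m q.
have E : forall a b, weylU R (k, l) i a * cconj (weylU R (k, l) j b) * weylU R (m, q) a b
  = (i == a + k)%:R * ((j == b + k)%:R *
     (chi (a * l) * chi (- (b * l)) * ((a == b + m)%:R * chi (b * q)))).
  by move=> a b; rewrite !weylUE conj_nat conj_chi; ring.
under eq_bigr => a _ do under eq_bigr => b _ do rewrite E.
under eq_bigr => a _ do rewrite -big_distrr.
rewrite sum_shift sum_shift /= HmatE weylUE /= subr_eq addrAC subrK.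
case: eqP => [->|_]; last by rewrite !(mul0r, mulr0).
by rewrite !mul1r -!chiD; congr chi; ring.
Qed.

Local Notation NN := (N * N)%N.
Local Notation ux := (@mxtens.mxtens_unindex N N).
Local Notation ix := (@mxtens.mxtens_index N N).
Lemma uxK : cancel ux ix. Proof. exact: mxtens.mxtens_unindexK. Qed.
Lemma ixK : cancel ix ux. Proof. exact: mxtens.mxtens_indexK. Qed.

Definition Wv (c : L) (r : 'I_NN) : C := weylU R c (ux r).1 (ux r).2.
Definition Wm : 'M[C]_NN := \matrix_(r, s) Wv (ux s) r.
Definition Ws : 'M[C]_NN := \matrix_(r, s) cconj (Wv (ux r) s).

Lemma sum_tens (F : 'I_NN -> C) : \sum_r F r = \sum_(i : 'I_N) \sum_(j : 'I_N) F (ix (i, j)).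
Proof.
rewrite (reindex ix) /=; last by exists ux => x _; [exact: ixK | exact: uxK].
rewrite pair_big /=; apply: eq_bigr => -[i j] _ //.
Qed.

Lemma WsW : Ws *m Wm = N%:R *: 1%:M.
Proof.
apply/matrixP => r s; rewrite !mxE sum_tens.
under eq_bigr => i _ do under eq_bigr => j _ do rewrite !mxE /Wv ixK /=.
rewrite tr_orth (inj_eq (can_inj uxK)) mulrC.
by case: (r == s); rewrite ?mulr1 ?mulr0.
Qed.

Lemma N_neq0 : (N%:R : C) != 0.
Proof. by rewrite pnatr_eq0. Qed.

Lemma WWs : Wm *m Ws = N%:R *: 1%:M.
Proof.
have h : (N%:R^-1 *: Ws) *m Wm = 1%:M.
  by rewrite -scalemxAl WsW scalerA mulVf ?N_neq0 // scale1r.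
have := mulmx1C h; rewrite -scalemxAr => /(congr1 (fun M => N%:R *: M)).
by rewrite scalerA mulfV ?N_neq0 // scale1r.
Qed.

Definition Dg (f : L -> C) : 'M[C]_NN := diag_mx (\row_r f (ux r)).
Definition Msup (f : L -> C) : 'M[C]_NN := N%:R^-1 *: (Wm *m Dg f *m Ws).

Lemma MsupM f g : Msup f *m Msup g = Msup (fun c => f c * g c).
Proof.
rewrite /Msup -scalemxAl -scalemxAr scalerA -!mulmxA (mulmxA Ws) WsW.
rewrite -scalemxAl mul1mx -scalemxAr -scalemxAr scalerA.
rewrite -mulrA mulVf ?N_neq0 // mulr1 (mulmxA (Dg f)) /Dg mulmx_diag.
congr (_ *: (_ *m (diag_mx _ *m _))); apply/matrixP => i j; by rewrite !mxE.
Qed.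

Lemma Msup1 : Msup (fun _ => 1) = 1%:M.
Proof.
rewrite /Msup /Dg.
rewrite (_ : \row_r _ = (const_mx 1 : 'rV[C]_NN)); last by apply/matrixP => i j; rewrite !mxE.
by rewrite diag_const_mx mulmx1 WWs scalerA mulVf ?N_neq0 // scale1r.
Qed.

Lemma MsupE f r s : Msup f r s =
  N%:R^-1 * \sum_t Wv (ux t) r * f (ux t) * cconj (Wv (ux t) s).
Proof.
rewrite /Msup mxE; congr (_ * _); rewrite mxE; apply: eq_bigr => t _.
by rewrite mul_mx_diag !mxE.
Qed.

Lemma Msup_ext f g : (forall c, f c = g c) -> Msup f = Msup g.
Proof. by move=> h; congr Msup; apply/funext. Qed.

Lemma MsupB f g : Msup (fun c => f c - g c) = Msup f - Msup g.
Proof.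
apply/matrixP => r s.
have -> : (Msup f - Msup g) r s = Msup f r s - Msup g r s by rewrite !mxE.
rewrite !MsupE -mulrBr -sumrB; congr (_ * _).
by apply: eq_bigr => t _; rewrite mulrBr mulrBl.
Qed.

Lemma MsupZ a f : Msup (fun c => a * f c) = a *: Msup f.
Proof.

apply/matrixP => r s.
have -> : (a *: Msup f) r s = a * Msup f r s by rewrite !mxE.
rewrite !MsupE [RHS]mulrCA; congr (_ * _); rewrite big_distrr.
by apply: eq_bigr => t _ /=; ring.
Qed.

Lemma Msup_sum (I : finType) (P : pred I) (F : I -> L -> C) :
  Msup (fun c => \sum_(i | P i) F i c) = \sum_(i | P i) Msup (F i).
Proof.
apply/matrixP => r s; rewrite summxE MsupE.
under [in RHS]eq_bigr do rewrite MsupE.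
rewrite -big_distrr; congr (_ * _); rewrite exchange_big; apply: eq_bigr => t _.
by rewrite big_distrr big_distrl; apply: eq_bigr => i _.
Qed.

Lemma Msup_inj f g : Msup f = Msup g -> forall c, f c = g c.
Proof.
move=> h c.
have key : forall f, Ws *m Msup f *m Wm = N%:R *: Dg f.
  move=> f'; rewrite /Msup -scalemxAr -scalemxAl !mulmxA WsW -!mulmxA WsW.
  by rewrite -scalemxAl mul1mx -!scalemxAr mulmx1 !scalerA mulVf ?N_neq0 // mul1r.
have := key f; rewrite h key => /(congr1 (fun M : 'M[C]_NN => M (ix c) (ix c))).
rewrite !mxE !eqxx /= ixK => /eqP; rewrite !mulr1n (inj_eq (mulfI N_neq0)).
by move/eqP.
Qed.


Lemma superop_eig (U : 'M[C]_N) (lam : L -> C)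
  (h : forall c i j, \sum_a \sum_b U i a * cconj (U j b) * weylU R c a b =
                      lam c * weylU R c i j) :
  superop U *m Wm = Wm *m Dg lam.
Proof.
apply/matrixP => r s; rewrite mul_mx_diag !mxE sum_tens.
case: (mxtens.mxtens_indexP r) => i j.
under eq_bigr => a _ do under eq_bigr => b _ do
  rewrite /superop !mxE /Wv !mxtens.mxtens_indexK /=.
by rewrite /Wv mxtens.mxtens_indexK /= h mulrC.
Qed.

Lemma superopE mu : superop (weylU R mu) = Msup (fun c => Hmat R c mu).
Proof.
have E := @superop_eig (weylU R mu) (fun c => Hmat R c mu) (fun c i j => eig mu c i j).
have h1 : Wm *m (N%:R^-1 *: Ws) = 1%:M.
  by rewrite -scalemxAr WWs scalerA mulVf ?N_neq0 // scale1r.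
by rewrite -[LHS]mulmx1 -h1 mulmxA E /Msup -scalemxAr.
Qed.

End Om.



Section Main.
Variable R : realType.
Local Notation C := (Cx R).
Variable n : nat.
Local Notation N := n.+2.
Local Notation L := ('I_N * 'I_N)%type.
Local Notation NN := (N * N)%N.
Local Notation Msup := (Msup R n).
Local Notation chi := (chi R n).

Lemma is_zeroE (mu : L) : is_zero_idx mu = (mu == (0,0)).
Proof. by case: mu => a b; rewrite /is_zero_idx xpair_eqE. Qed.

Lemma H0r (c : L) : Hmat R c (0,0) = 1.
Proof. by rewrite HmatE /= mulr0 mul0r subr0 chi0. Qed.

Lemma H0l (mu : L) : Hmat R (0,0) mu = 1.
Proof. by rewrite HmatE /= mulr0 mul0r subr0 chi0. Qed.

Lemma Hinv (mu ka : L) :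
  \sum_(nu : L) Hmat R mu nu * Hmat R nu ka = (mu == ka)%:R * (NN%:R : C).
Proof.
case: mu => a b; case: ka => c e.
rewrite -(pair_big xpredT xpredT (fun k l => Hmat R (a, b) (k, l) * Hmat R (k, l) (c, e))) /=.
have E : forall k l : 'I_N, Hmat R (a, b) (k, l) * Hmat R (k, l) (c, e) =
   chi (k * (e - b)) * chi (l * (a - c)).
  by move=> k l; rewrite !HmatE /= -!chiD; congr chi; ring.
under eq_bigr => k _ do under eq_bigr => l _ do rewrite E.
under eq_bigr => k _ do rewrite -big_distrr /= sum_chi.
rewrite -big_distrl /= sum_chi xpair_eqE !subr_eq0 (eq_sym e) natrM.
by case: (a == c); case: (b == e); rewrite /= ?mul0r ?mulr0 ?mul1r.
Qed.


Lemma Hsum (mu : L) : \sum_(nu : L) Hmat R mu nu = (mu == (0,0))%:R * (NN%:R : C).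
Proof. by rewrite -Hinv; apply: eq_bigr => nu _; rewrite H0r mulr1. Qed.

Lemma LgenE mu : Lgen R mu = Msup (fun c => Hmat R c mu - 1).
Proof. by rewrite /Lgen superopE MsupB Msup1. Qed.

Definition dd (t : L -> C) (c : L) : C :=
  \sum_(mu | ~~ is_zero_idx mu) t mu * (Hmat R c mu - 1).

Lemma genE (t : L -> C) :
  \sum_(mu | ~~ is_zero_idx mu) t mu *: Lgen R mu = Msup (dd t).
Proof.
rewrite /dd Msup_sum; apply: eq_bigr => mu _.
by rewrite LgenE MsupZ.
Qed.

Lemma MsupX f k : Msup f ^+ k = Msup (fun c => f c ^+ k).
Proof.
elim: k => [|k IH].
  by rewrite expr0 (@Msup_ext R n _ (fun _ => 1)) ?Msup1 // => c; rewrite expr0.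
by rewrite exprSr IH -mulmxE MsupM; apply: Msup_ext => c; rewrite exprSr.
Qed.

Lemma psumE f m : \sum_(k < m) (k`!%:R)^-1 *: Msup f ^+ k = Msup (fun c => es m (f c)).
Proof.
rewrite /es Msup_sum; apply: eq_bigr => k _.
by rewrite MsupX MsupZ.
Qed.

Lemma mexp_Msup f : is_mexp (Msup f) (Msup (fun c => cexp (f c))).
Proof.
move=> r s; under eq_fun do rewrite psumE MsupE.
rewrite MsupE; apply: ccvg_mull; apply: ccvg_sum => t.
apply: ccvg_mulr; apply: ccvg_mull; exact: cexp_series.
Qed.

Lemma mexp_unique (A B1 B2 : 'M[C]_NN) : is_mexp A B1 -> is_mexp A B2 -> B1 = B2.
Proof.
move=> h1 h2; apply/matrixP => r s; exact: ccvg_unique (h1 r s) (h2 r s).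
Qed.

Lemma channelE p : weyl_channel p = Msup (lambda p).
Proof.
rewrite /weyl_channel /lambda Msup_sum; apply: eq_bigr => mu _.
by rewrite superopE -MsupZ; apply: Msup_ext => c; rewrite mulrC.
Qed.


Lemma cR_sum (I : Type) (r : seq I) (P : pred I) (f : I -> R) :
  \sum_(i <- r | P i) cR (f i) = cR (\sum_(i <- r | P i) f i).
Proof.
apply/eqP; rewrite eq_complex Re_sum Im_sum /= eqxx /= big1 //.
Qed.

Lemma lambda0 (p : L -> R) : is_prob_vector p -> lambda p ((0,0) : L) = 1.
Proof.
case=> _ h1; rewrite /lambda.
under eq_bigr do rewrite H0l mul1r.
by rewrite cR_sum h1.
Qed.

Lemma dd0 t : dd t (0,0) = 0.
Proof. by rewrite /dd big1 // => mu _; rewrite H0l subrr mulr0. Qed.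

Definition lz (l : L -> C) (c : L) : C := if is_zero_idx c then 0 else l c.

Lemma NN2 : ((N ^ 2)%:R : C) = NN%:R.
Proof. by rewrite mulnn. Qed.

Lemma tcoefE l mu : tcoef l mu = (NN%:R)^-1 * \sum_(nu : L) Hmat R mu nu * lz l nu.
Proof.
rewrite /tcoef NN2; congr (_ * _); rewrite big_mkcond; apply: eq_bigr => nu _.
by rewrite /lz; case: (is_zero_idx nu); rewrite /= ?mulr0.
Qed.

Lemma NN_neq0 : (NN%:R : C) != 0.
Proof. by rewrite pnatr_eq0 muln_eq0. Qed.

Lemma tcoefK l c : \sum_(mu : L) tcoef l mu * Hmat R c mu = lz l c.
Proof.
under eq_bigr do rewrite tcoefE -mulrA big_distrl /=.
rewrite -big_distrr /= exchange_big /=.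
under eq_bigr => nu _ do under eq_bigr => mu _ do rewrite mulrAC mulrC (mulrC (Hmat R mu nu)).
under eq_bigr => nu _ do rewrite -big_distrr /= Hinv.
rewrite (bigD1 c) //= eqxx big1 ?addr0; last first.
  by move=> nu; rewrite eq_sym => /negPf ->; rewrite mul0r mulr0.
by rewrite mul1r mulrCA mulVf ?NN_neq0 ?mulr1.
Qed.


Lemma tcoef_inv l c : dd (tcoef l) c = lz l c.
Proof.
rewrite /dd big_rmcond /=; last first.
  by move=> mu; rewrite negbK is_zeroE => /eqP ->; rewrite H0r subrr mulr0.
under eq_bigr do rewrite mulrBr mulr1.
rewrite sumrB tcoefK.
have -> : \sum_(mu : L) tcoef l mu = lz l (0,0).
  by rewrite -tcoefK; apply: eq_bigr => mu _; rewrite H0l mulr1.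
by rewrite /lz /= subr0.
Qed.

Lemma lz_dd t c : lz (dd t) c = dd t c.
Proof.
by rewrite /lz; case: ifP => //; rewrite is_zeroE => /eqP ->; rewrite dd0.
Qed.

Lemma tcoef_fwd t mu : ~~ is_zero_idx mu -> tcoef (dd t) mu = t mu.
Proof.
move=> hmu; rewrite tcoefE.
under eq_bigr => nu _ do rewrite lz_dd /dd big_distrr /=.
rewrite exchange_big /=.
have E : forall ka, \sum_nu Hmat R mu nu * (t ka * (Hmat R nu ka - 1)) =
   t ka * ((mu == ka)%:R * NN%:R - (mu == (0,0))%:R * NN%:R).
  move=> ka; rewrite -Hinv -Hsum -sumrB big_distrr /=.
  by apply: eq_bigr => nu _ /=; ring.
under eq_bigr => ka _ do rewrite E.
have hz : (mu == (0,0)) = false by apply/negbTE; rewrite -is_zeroE.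
under eq_bigr => ka _ do rewrite hz mul0r subr0.
rewrite (bigD1 mu) //= eqxx big1 ?addr0; last first.
  by move=> ka /andP[_ hk]; rewrite eq_sym (negPf hk) mul0r mulr0.
by rewrite mul1r mulrCA mulVf ?NN_neq0 ?mulr1.
Qed.


Lemma cR_Re (z : C) : cIm z = 0 -> cR (cRe z) = z.
Proof. by case: z => a b /= ->. Qed.

Lemma cexp0 : cexp (0 : C) = 1.
Proof. by rewrite /cexp /= expR0 cos0 sin0 mulr1 mulr0. Qed.

Lemma part2 (p : L -> R) (hp : is_prob_vector p) (l : L -> C) : good_logs p l ->
  is_mexp (\sum_(mu | ~~ is_zero_idx mu) cR (cRe (tcoef l mu)) *: Lgen R mu)
          (weyl_channel p).
Proof.
case=> hl ht.
have -> : \sum_(mu | ~~ is_zero_idx mu) cR (cRe (tcoef l mu)) *: Lgen R mu =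
          Msup (dd (tcoef l)).
  rewrite -genE; apply: eq_bigr => mu hmu; congr (_ *: _).
  by apply: cR_Re; case: (ht mu hmu).
rewrite channelE.
have -> : Msup (lambda p) = Msup (fun c => cexp (dd (tcoef l) c)).
  apply: Msup_ext => c; rewrite tcoef_inv /lz.
  case: ifP => hc; last by rewrite hl // hc.
  by move: hc; rewrite is_zeroE => /eqP ->; rewrite lambda0 // cexp0.
exact: mexp_Msup.
Qed.

Local Close Scope classical_set_scope.
Lemma main_n (p : L -> R) (hp : is_prob_vector p) :
  (in_AQ (weyl_channel p) <-> exists l : L -> C, good_logs p l) /\
  (forall l : L -> C, good_logs p l ->
     is_mexp (\sum_(mu | ~~ is_zero_idx mu)
                cR (cRe (tcoef l mu)) *: Lgen R mu) (weyl_channel p)).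
Proof.
split; last exact: part2.
split.
  case=> t [ht hexp].
  rewrite (genE (fun mu => cR (t mu))) in hexp.
  have := @mexp_unique _ _ _ hexp (mexp_Msup _); rewrite channelE => /Msup_inj hl.
  exists (dd (fun mu => cR (t mu))); split.
    by move=> nu _; rewrite hl.
  by move=> mu hmu; rewrite tcoef_fwd //=; split => //; exact: ht.
case=> l hl; exists (fun mu => cRe (tcoef l mu)); split.
  by move=> mu hmu; case: hl => _ /(_ mu hmu) [].
exact: part2.
Qed.

End Main.

Theorem theorem1 (R : realType) (N : nat) (hN : (2 <= N)%N)
  (p : 'I_N * 'I_N -> R) (hp : is_prob_vector p) :
  (in_AQ (weyl_channel p) <-> exists l : 'I_N * 'I_N -> Cx R, good_logs p l) /\
  (forall l : 'I_N * 'I_N -> Cx R, good_logs p l ->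
     is_mexp (\sum_(mu | ~~ is_zero_idx mu)
                cR (cRe (tcoef l mu)) *: Lgen R mu) (weyl_channel p)).
Proof.
case: N hN p hp => [|[|n]] // _ p hp.
exact: main_n.
Qed.
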